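(* Let $n\in\mathbb{N}$ and assign each vertex $x$ of $K_n$ a weight $w(x)>0$; define the weight of an edge $xy$ as $w(xy):=w(x)w(y)$ and, for a subgraph $H\subseteq K_n$, $w(H):=\sum_{e\in E(H)}w(e)$. Let $S_n:=\sum_{x\in V(K_n)}w(x)$ and $M_n:=\max_{x\in V(K_n)}w(x)$. Then for every $\ell\ge 2$, $$w(K_n)-\max\{w(H): H\subseteq K_n,\ K_\ell\not\subseteq H\}\ \ge\ \frac{S_n}{2}\left(\frac{S_n}{\ell-1}-M_n\right).$$ *)

(* Defs.v *)
From mathcomp Require Import all_boot all_order all_algebra.
Set Implicit Arguments. Unset Strict Implicit. Unset Printing Implicit Defensive.
Import Order.TTheory GRing.Theory Num.Theory.
Local Open Scope ring_scope.

(* A subgraph H of K_n is represented by its edge set E (vertices of H are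
   irrelevant to its weight and to containing a K_l). *)
Definition Kn_edges (n : nat) : {set {set 'I_n}} := [set e : {set 'I_n} | #|e| == 2%N].

Definition is_subgraph (n : nat) (E : {set {set 'I_n}}) : Prop :=
  E \subset Kn_edges n.

Definition edge_weight (R : numDomainType) (n : nat) (w : 'I_n -> R)
  (e : {set 'I_n}) : R := \prod_(x in e) w x.

Definition graph_weight (R : numDomainType) (n : nat) (w : 'I_n -> R)
  (E : {set {set 'I_n}}) : R := \sum_(e in E) edge_weight w e.

Definition contains_clique (n : nat) (E : {set {set 'I_n}}) (l : nat) : Prop :=
  exists S : {set 'I_n}, #|S| = l /\
    forall x y, x \in S -> y \in S -> x != y -> [set x; y] \in E.

Definition total_weight (R : numDomainType) (n : nat) (w : 'I_n -> R) : R :=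
  \sum_(x < n) w x.

(* maximum vertex weight (0 for n = 0; weights are positive) *)
Definition max_weight (R : realDomainType) (n : nat) (w : 'I_n -> R) : R :=
  \big[Num.max/0]_(x < n) w x.

(* Main.v *)
Require Import Defs.
From mathcomp Require Import all_boot all_order all_algebra.
From mathcomp Require Import ring lra.
Import Order.TTheory GRing.Theory Num.Theory.
Local Open Scope ring_scope.

Section Aux.
Variables (R : realFieldType) (n : nat) (w : 'I_n -> R) (E : {set {set 'I_n}}).
Hypothesis hw : forall x, 0 < w x.

Definition nadj (x y : 'I_n) : bool := (x == y) || ([set x; y] \notin E).
Definition Dw (U : {set 'I_n}) x := \sum_(y in U | nadj x y) w y.
Definition Sw (U : {set 'I_n}) := \sum_(x in U) w x.
Definition clique (I : {set 'I_n}) := forall x y, x \in I -> y \in I -> x != y -> [set x; y] \in E.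

Lemma Sw_ge0 U : 0 <= Sw U.
Proof. by apply: sumr_ge0 => x _; apply: ltW. Qed.

Lemma Dw_ge0 U x : 0 <= Dw U x.
Proof. by apply: sumr_ge0 => y _; apply: ltW. Qed.

Lemma Dw_sub (U U' : {set 'I_n}) x : U' \subset U -> Dw U' x <= Dw U x.
Proof.
move=> sub; rewrite /Dw [in X in _ <= X](big_setIDcond _ U U') (setIidPr sub).
by rewrite lerDl; apply: sumr_ge0 => y _; apply: ltW.
Qed.

Lemma main_ind k : forall U : {set 'I_n}, (forall I : {set 'I_n}, I \subset U -> clique I -> #|I| <> k.+1) ->
  Sw U ^+ 2 <= k%:R * \sum_(x in U) w x * Dw U x.
Proof.
elim: k => [|k IH] U H.
  case: (set_0Vmem U) => [->|[x xU]]; first by rewrite /Sw big_set0 expr0n mul0r.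
  exfalso; apply: (H [set x]); first by rewrite sub1set.
    by move=> a b; rewrite !inE => /eqP -> /eqP ->; rewrite eqxx.
  by rewrite cards1.
case: (set_0Vmem U) => [->|[x0 x0U]].
  rewrite /Sw big_set0 expr0n /=; apply: mulr_ge0 => //.
  by apply: sumr_ge0 => x _; apply: mulr_ge0; [apply: ltW | apply: Dw_ge0].
case: (arg_minP (fun i => Dw U i) x0U) => v; rewrite -/(v \in U) => vU vmin.
set N := [set y in U | nadj v y].
have NU : N \subset U by apply/subsetP => y; rewrite inE => /andP[].
set U' := U :\: N.
have U'U : U' \subset U by apply: subsetDl.
have hSw : Sw U = Sw N + Sw U' by rewrite /Sw (big_setID N) (setIidPr NU).
have hSN : Sw N = Dw U v.
  by rewrite /Sw /Dw big_set /=.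
have hsum : \sum_(x in U) w x * Dw U x =
   \sum_(x in N) w x * Dw U x + \sum_(x in U') w x * Dw U x.
  by rewrite (big_setID N) (setIidPr NU).
have H' : forall I : {set 'I_n}, I \subset U' -> clique I -> #|I| <> k.+1.
  move=> I IU' cI cardI.
  have vI : v \notin I.
    by apply/negP => /(subsetP IU'); rewrite !inE vU /= /nadj eqxx.
  have key : forall b, b \in I -> [set v; b] \in E.
    move=> b /(subsetP IU'); rewrite !inE => /andP[h1 h2]; move: h1.
    by rewrite h2 /= /nadj negb_or => /andP[_]; apply: negbNE.
  apply: (H (v |: I)).
  - rewrite subUset; apply/andP; split; [by rewrite sub1set | exact: subset_trans IU' U'U].
  - move=> a b; rewrite !inE => /orP[/eqP ->|aI] /orP[/eqP ->|bI]; rewrite ?eqxx //.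
    + by move=> _; apply: key.
    + by move=> _; rewrite setUC; apply: key.
    + exact: cI.
  by rewrite cardsU1 vI cardI.
have IH' := IH U' H'.
have hA : Sw U' ^+ 2 <= k%:R * \sum_(x in U') w x * Dw U x.
  apply: (le_trans IH'); apply: ler_wpM2l => //; apply: ler_sum => x xU'.
  by apply: ler_wpM2l; [exact: ltW | exact: Dw_sub].
have hB : Dw U v * Dw U v <= \sum_(x in N) w x * Dw U x.
  rewrite -{1}hSN /Sw mulr_suml; apply: ler_sum => x xN; apply: ler_wpM2l; first exact: ltW.
  by apply: vmin; exact: (subsetP NU).
have A0 : 0 <= \sum_(x in U') w x * Dw U x.
  by apply: sumr_ge0 => x _; apply: mulr_ge0; [apply: ltW | apply: Dw_ge0].
have s0 := Sw_ge0 U'. have d0 := Dw_ge0 U v.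
rewrite hSw hSN hsum -natr1.
move: hA hB A0 s0 d0.
set s := Sw U'. set d := Dw U v. set A := \sum_(x in U') _. set B := \sum_(x in N) _.
have K0 : 0 <= k%:R :> R by [].
move: K0; set K := k%:R => K0 hA hB A0 s0 d0.
have [Kz|Kp] := eqVneq K 0.
  rewrite Kz mul0r in hA.
  have : s ^+ 2 == 0 by rewrite eq_le hA sqr_ge0.
  rewrite sqrf_eq0 => /eqP sz; rewrite sz Kz; nra.
have Kpos : 0 < K by rewrite lt_def Kp K0.
have h1 : 0 <= (K + 1) * (K * A - s ^+ 2) by apply: mulr_ge0; [lra | rewrite subr_ge0].
have h2 : 0 <= K * (K + 1) * (B - d * d) by apply: mulr_ge0; [nra | rewrite subr_ge0].
have h3 : 0 <= (K * d - s) ^+ 2 by apply: sqr_ge0.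
suff : 0 <= K * ((K + 1) * (B + A) - (d + s) ^+ 2).
  by rewrite pmulr_rge0 // subr_ge0.
nra.
Qed.

Lemma set2_eq (x y a b : 'I_n) : x != y -> [set x; y] = [set a; b] ->
  (x, y) = (a, b) \/ (x, y) = (b, a).
Proof.
move=> xy h.
have hx : x \in [set a; b] by rewrite -h set21.
have hy : y \in [set a; b] by rewrite -h set22.
move: hx hy; rewrite !inE => /orP[/eqP ex|/eqP ex] /orP[/eqP ey|/eqP ey]; subst.
- by rewrite eqxx in xy.
- by left.
- by right.
- by rewrite eqxx in xy.
Qed.

Lemma ew2 (a b : 'I_n) : a != b -> edge_weight w [set a; b] = w a * w b.
Proof. by move=> ab; rewrite /edge_weight big_setU1 ?big_set1 // in_set1. Qed.

Lemma ident (hE : E \subset Kn_edges n) :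
  \sum_(x in [set: 'I_n]) w x * Dw [set: 'I_n] x =
  \sum_(x < n) w x * w x + 2%:R * (graph_weight w (Kn_edges n) - graph_weight w E).
Proof.
have -> : graph_weight w (Kn_edges n) - graph_weight w E =
    \sum_(e in Kn_edges n :\: E) edge_weight w e.
  by rewrite /graph_weight (big_setID E) (setIidPr hE) addrAC subrr add0r.
have step : forall x, w x * Dw [set: 'I_n] x =
    w x * w x + \sum_(y | (x != y) && ([set x; y] \notin E)) w x * w y.
  move=> x; rewrite /Dw mulr_sumr (bigD1 x) /=; last by rewrite in_setT /nadj eqxx.
  congr (_ + _); apply: eq_bigl => y; rewrite in_setT /nadj /= (eq_sym y x).
  by case: (x == y) => /=; rewrite ?andbT.
rewrite (eq_bigr _ (fun x _ => step x)) big_split /=; congr (_ + _).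
  by apply: eq_bigl => x; rewrite in_setT.
rewrite pair_big_dep (partition_big (fun p => [set p.1; p.2]) (fun e => e \in Kn_edges n :\: E)).
  rewrite mulr_sumr; apply: eq_bigr => e; rewrite inE => /andP[eE].
  rewrite /Kn_edges inE => /cards2P[a [b [ab ee]]]; subst e.
  rewrite (bigD1 (a, b)) /=; last by rewrite in_setT ab eE eqxx.
  rewrite (bigD1 (b, a)) /=; last first.
    by rewrite in_setT xpair_eqE negb_and (eq_sym b a) ab (setUC [set b]) eE eqxx.
  rewrite big_pred0; last first.
    move=> [x y] /=; apply/negP => /andP[/andP[/andP[/and3P[_ xy _] /eqP hs] h1] h2].
    by case: (set2_eq _ _ _ _ xy hs) => hh; [move: h1 | move: h2]; rewrite hh eqxx.
  by rewrite ew2 // addr0; ring.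
move=> [x y] /= /and3P[_ xy nE].
by rewrite inE nE /= /Kn_edges inE cards2 xy.
Qed.

End Aux.

Theorem mainTheorem8 (R : realFieldType) (n : nat) (w : 'I_n -> R)
  (hw : forall x, 0 < w x) (l : nat) (hl : (2 <= l)%N) :
  forall E : {set {set 'I_n}}, is_subgraph E -> ~ contains_clique E l ->
    graph_weight w (Kn_edges n) - graph_weight w E >=
      total_weight w / 2%:R * (total_weight w / (l.-1)%:R - max_weight w).
Proof.
move=> E hE hnc.
have l0 : (0 < l)%N by apply: ltnW.
have key := @main_ind R n w E hw l.-1 [set: 'I_n].
have {key} key : Sw _ _ w [set: 'I_n] ^+ 2 <=
    (l.-1)%:R * \sum_(x in [set: 'I_n]) w x * Dw _ _ w E [set: 'I_n] x.
  apply: key => I _ cI cI'; apply: hnc; exists I; split; last exact: cI.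
  by rewrite cI' prednK.
have hid := @ident R n w E hE.
have hS : Sw _ _ w [set: 'I_n] = total_weight w.
  by rewrite /Sw /total_weight; apply: eq_bigl => x; rewrite in_setT.
have hQ : \sum_(x < n) w x * w x <= max_weight w * total_weight w.
  rewrite /total_weight mulr_sumr; apply: ler_sum => x _.
  apply: ler_wpM2r; first exact: ltW.
  exact: le_bigmax.
have Kp : 0 < (l.-1)%:R :> R by rewrite ltr0n -ltnS prednK.
rewrite hS hid in key.
move: key hQ Kp.
set S := total_weight w. set Q := \sum_(x < n) _. set W := _ - _.
set K := (l.-1)%:R. set M := max_weight w => key hQ Kp.
have hX : S * (S / K) <= Q + 2%:R * W.
  by rewrite mulrA ler_pdivrMr // -expr2 (mulrC _ K).
rewrite mulrBr.
lra.
Qed.
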